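(* Let $m\geq 1$, let $x_1,\ldots,x_m\in\{0,1\}$ with $x_j\neq x_{j+1}$ for $1\le j<m$ and $x_m=1$, and let $k_1,\ldots,k_m$ be positive integers with $k_1\geq 2$. Let $G$ be the threshold graph generated by the binary sequence $x_1^{k_1},x_2^{k_2},\ldots,x_m^{k_m}$, and let $n=k_1+\cdots+k_m$ be its number of vertices. Then \[ \operatorname{cdim}(G)=\begin{cases} n-m & \text{if } k_m>1,\\ n-m+1 & \text{if } k_m=1.\end{cases} \]
   Context: All graphs are finite, simple, undirected and nonempty. A threshold graph on $n$ vertices is generated by a binary sequence $y_1,\ldots,y_n\in\{0,1\}$: starting from the empty graph, in step $i$ one adds a new vertex which is isolated if $y_i=0$ and adjacent to all previously added vertices if $y_i=1$. The notation $x_1^{k_1},\ldots,x_m^{k_m}$ denotes the binary sequence consisting of $k_1$ copies of $x_1$, followed by $k_2$ copies of $x_2$, etc. For distinct vertices $v,w$, $\kappa(v,w)$ is the maximum number of internally vertex-disjoint $v$–$w$ paths (an edge $vw$ counts as one such path); $\kappa(v,v)=\infty$. For an ordered vertex set $W=(w_1,\ldots,w_k)$, $r_G(v,W)=[\kappa(v,w_1),\ldots,\kappa(v,w_k)]$. $W$ is resolving if $r_G(v_1,W)=r_G(v_2,W)$ implies $v_1=v_2$. The connectivity dimension $\operatorname{cdim}(G)$ is the minimum cardinality of a resolving set. *)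

(* Defs.v *)
From mathcomp Require Import all_boot.
From mathcomp Require Import boolp.

Set Implicit Arguments.
Unset Strict Implicit.
Unset Printing Implicit Defensive.

Section Graphs.
Variable T : finType.
Variable adj : rel T.  (* intended: symmetric and irreflexive *)

Definition is_vw_path (v w : T) (p : seq T) : bool :=
  [&& head w p == v, last v p == w, path adj v (behead p), uniq p & p != [::]].

Definition interior (v w : T) (p : seq T) : {set T} :=
  [set x in p | (x != v) && (x != w)].

Definition has_disjoint_paths (v w : T) (k : nat) : Prop :=
  exists F : seq (seq T),
    [/\ size F = k, uniq F, all (is_vw_path v w) F &
        pairwise (fun p q => [disjoint interior v w p & interior v w q]) F].

(* local connectivity kappa(v,w); None encodes infinity (v = w).
   Any such family has at most #|T| members, so the max over k <= #|T| is the
   true maximum. *)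
Definition kappa (v w : T) : option nat :=
  if v == w then None
  else Some (\max_(k < #|T|.+1 | `[< has_disjoint_paths v w k >]) (k : nat)).

Definition resolving (W : {set T}) : bool :=
  [forall v1 : T, forall v2 : T,
     [forall u in W, kappa v1 u == kappa v2 u] ==> (v1 == v2)].

Definition cdim : nat :=
  \big[minn/#|T|]_(W : {set T} | resolving W) #|W|.
End Graphs.

Definition block_seq (xs : seq bool) (ks : seq nat) : seq bool :=
  flatten [seq nseq p.2 p.1 | p <- zip xs ks].

(* threshold graph on vertices 0..n-1 generated by y (vertex i added at step i+1):
   i ~ j iff i <> j and the later of the two was added as a dominating vertex. *)
Definition threshold_adj (n : nat) (y : seq bool) : rel 'I_n :=
  fun i j => (i != j) && nth false y (maxn i j).

(* Main.v *)
Require Import Defs.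
From mathcomp Require Import all_boot.
From mathcomp Require Import boolp.
From mathcomp Require Import zify.
Set Warnings "-all".
Set Implicit Arguments.
Unset Strict Implicit.
Unset Printing Implicit Defensive.

Lemma disjP (T : finType) (A B : {set T}) :
  reflect (forall x, x \in A -> x \in B -> False) [disjoint A & B].
Proof.
rewrite disjoint_subset; apply: (iffP subsetP) => H x xa.
  by move=> xb; have := H x xa; rewrite inE xb.
by rewrite inE; apply/negP => /(H x xa).
Qed.

Lemma pairwise_mem (A : eqType) (r : rel A) (s : seq A) : symmetric r ->
  pairwise r s -> forall x y, x \in s -> y \in s -> x != y -> r x y.
Proof.
move=> rs; elim: s => [|a s IH] //= /andP [/allP ha hp] x y.
rewrite !inE; case/predU1P => [->|xs]; case/predU1P => [->|ys].
- by rewrite eqxx.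
- by move=> _; apply: ha.
- by move=> _; rewrite rs; apply: ha.
- by apply: IH.
Qed.

Lemma mem_pairwise (A : eqType) (r : rel A) (s : seq A) : uniq s ->
  (forall x y, x \in s -> y \in s -> x != y -> r x y) -> pairwise r s.
Proof.
elim: s => [|a s IH] //= /andP [ns us] H; apply/andP; split.
  apply/allP => y ys; apply: H; rewrite ?inE ?eqxx ?ys ?orbT //.
  by apply: contraNneq ns => ->.
by apply: IH => // x y xs ys; apply: H; rewrite inE ?xs ?ys orbT.
Qed.

Section Gen.
Variable T : finType.
Variable adj : rel T.
Hypothesis adj_irr : irreflexive adj.
Hypothesis adj_sym : symmetric adj.

Definition nbh (a : T) : {set T} := [set u | adj a u].
Definition deg a := #|nbh a|.

Lemma vw_pathP v w p : is_vw_path adj v w p <->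
  exists p', [/\ p = v :: p', path adj v p', last v p' = w & uniq (v :: p')].
Proof.
split.
- case/and5P => /eqP hh /eqP hl hp hu hne.
  case: p hh hl hp hu hne => [|x p'] //= -> hl hp hu _.
  by exists p'.
- by move=> [p' [-> hp hl hu]]; rewrite /is_vw_path hu /= hp hl !eqxx.
Qed.

Lemma inter_mem (v w : T) p x : (x \in interior v w p) = [&& x \in p, x != v & x != w].
Proof. by rewrite inE. Qed.

Lemma hdp_le v w k : v != w -> has_disjoint_paths adj v w k -> k <= deg v.
Proof.
move=> vw [F [<- uF /allP allF pwF]].
pose s (p : seq T) := nth v p 1.
have sF : forall p, p \in F -> [/\ s p \in nbh v, (s p = w -> p = [:: v; w]) &
     (s p != w -> s p \in interior v w p)].
  move=> p /allF /vw_pathP [p' [-> hp hl hu]].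
  case: p' hp hl hu => [|u p''] /=.
    by move=> _ hl; move: vw; rewrite hl eqxx.
  move=> /andP [hvu _] hl hu; rewrite /s /= inE hvu; split => //.
    move=> uw; subst u; case: p'' hl hu => [|z q] //= hl.
    by move=> /andP [_ /andP []]; rewrite -hl mem_last.
  move=> uw; rewrite inter_mem !inE eqxx orbT /= uw andbT.
  by move: hu => /and3P [+ _ _]; rewrite inE negb_or eq_sym => /andP [].
have sinj : {in F &, injective s}.
  move=> p q pF qF spq; case: (eqVneq p q) => // pq.
  have dj := pairwise_mem (fun a b => disjoint_sym _ _) pwF pF qF pq.
  have [_ hp1 hp2] := sF p pF; have [_ hq1 hq2] := sF q qF.
  case: (eqVneq (s p) w) => spw.
    by rewrite (hp1 spw) hq1 // -spq.
  move/disjP: dj => dj; exfalso; apply: (dj (s p)); first exact: hp2.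
  by rewrite spq; apply: hq2; rewrite -spq.
rewrite -(size_map s) -(card_uniqP _).
  apply: subset_leq_card; apply/subsetP => x /mapP [p pF ->].
  by have [] := sF p pF.
by rewrite map_inj_in_uniq.
Qed.

Lemma hdp_deg a b : a != b -> (forall u, adj a u -> u != b -> adj u b) ->
  has_disjoint_paths adj a b (deg a).
Proof.
move=> ab H.
pose g u := if u == b then [:: a; b] else [:: a; u; b].
have gi : forall u, nth a (g u) 1 = u by move=> u; rewrite /g; case: eqP.
exists (map g (enum (nbh a))); split.
- by rewrite size_map -cardE.
- rewrite map_inj_in_uniq ?enum_uniq // => u v _ _.
  by move=> /(congr1 (fun p => nth a p 1)); rewrite !gi.
- apply/allP => p /mapP [u]; rewrite mem_enum inE => hu ->.
  have au : a != u by apply: contraTneq hu => ->; rewrite adj_irr.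
  rewrite /g; case: eqP => [ub|/eqP ub]; apply/vw_pathP.
    by exists [:: b]; subst u; rewrite /= hu !inE ab.
  exists [:: u; b]; rewrite /= hu H // !inE negb_or au ab ub; split => //.
- have ig : forall u x, x \in interior a b (g u) -> x = u.
    move=> u x; rewrite inter_mem /g.
    case: (u == b); rewrite !inE;
    by case: (x =P a); case: (x =P b); case: (x =P u); rewrite /= ?andbF.
  rewrite pairwise_map; apply: mem_pairwise; first exact: enum_uniq.
  move=> u v _ _ uv /=.
  apply/disjP => x /ig xu /ig xv; move: uv; by rewrite -xu -xv eqxx.
Qed.
End Gen.

Section Gen2.
Variable T : finType.
Variable adj : rel T.
Hypothesis adj_irr : irreflexive adj.
Hypothesis adj_sym : symmetric adj.

Lemma vw_rev v w p : v != w -> is_vw_path adj v w p -> is_vw_path adj w v (rev p).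
Proof.
move=> vw /vw_pathP [p' [-> hp hl hu]]; apply/vw_pathP.
case/lastP: p' hp hl hu => [|r z] hp hl hu.
  by move: vw; rewrite -hl /= eqxx.
rewrite last_rcons in hl; subst z.
exists (rcons (rev r) v); split.
- by rewrite rev_cons rev_rcons.
- have := rev_path adj v (rcons r w); rewrite last_rcons belast_rcons rev_cons => ->.
  by rewrite (eq_path (e' := adj)) // => x y /=; rewrite adj_sym.
- by rewrite last_rcons.
- by rewrite -rev_cons -rev_rcons rev_uniq.
Qed.

Lemma inter_rev (v w : T) p : interior w v (rev p) = interior v w p.
Proof. by apply/setP => x; rewrite !inE mem_rev [(x != w) && _]andbC. Qed.

Lemma hdp_sym v w k : v != w -> has_disjoint_paths adj v w k -> has_disjoint_paths adj w v k.
Proof.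
move=> vw [F [hs uF /allP allF pwF]]; exists (map rev F); split.
- by rewrite size_map.
- by rewrite (map_inj_uniq (@inv_inj _ rev (@revK _))).
- by apply/allP => q /mapP [p pF ->]; apply: vw_rev => //; apply: allF.
- by rewrite pairwise_map; move: pwF; apply: sub_pairwise => p q /=; rewrite !inter_rev.
Qed.

Lemma kappa_sym v w : kappa adj v w = kappa adj w v.
Proof.
rewrite /kappa eq_sym; case: eqP => // /eqP vw; congr Some.
apply: eq_bigl => k; apply/idP/idP => /asboolP h; apply/asboolP; apply: hdp_sym => //.
by rewrite eq_sym.
Qed.

Variable f : T -> T.
Hypothesis fK : involutive f.
Hypothesis fadj : forall x y, adj (f x) (f y) = adj x y.

Lemma finj : injective f. Proof. exact: inv_inj. Qed.

Lemma vw_f v w p : is_vw_path adj v w p -> is_vw_path adj (f v) (f w) (map f p).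
Proof.
move=> /vw_pathP [p' [-> hp hl hu]]; apply/vw_pathP; exists (map f p'); split => //.
- by rewrite path_map (eq_path (e' := adj)) // => x y /=; rewrite fadj.
- by rewrite last_map hl.
- by rewrite -map_cons (map_inj_uniq finj).
Qed.

Lemma inter_f v w p x : (x \in interior (f v) (f w) (map f p)) = (f x \in interior v w p).
Proof.
have e : forall a b, (a == f b) = (f a == b) by move=> a b; rewrite -(inj_eq finj) fK.
by rewrite !inE -{1}(fK x) (mem_map finj) !e.
Qed.

Lemma hdp_f v w k : has_disjoint_paths adj v w k -> has_disjoint_paths adj (f v) (f w) k.
Proof.
move=> [F [hs uF /allP allF pwF]]; exists (map (map f) F); split.
- by rewrite size_map.
- by rewrite (map_inj_uniq (inj_map finj)).
- by apply/allP => q /mapP [p pF ->]; apply: vw_f; apply: allF.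
- rewrite pairwise_map; move: pwF; apply: sub_pairwise => p q /= /disjP H.
  by apply/disjP => x; rewrite !inter_f; apply: H.
Qed.

Lemma kappa_f v w : kappa adj (f v) (f w) = kappa adj v w.
Proof.
rewrite /kappa (inj_eq finj); case: eqP => // _; congr Some.
apply: eq_bigl => k; apply/idP/idP => /asboolP h; apply/asboolP.
  by rewrite -(fK v) -(fK w); apply: hdp_f.
by apply: hdp_f.
Qed.
End Gen2.

Lemma kappa_deg (T : finType) (adj : rel T) (a b : T) : irreflexive adj -> a != b ->
  (forall u, adj a u -> u != b -> adj u b) -> kappa adj a b = Some (deg adj a).
Proof.
move=> irr ab H; rewrite /kappa (negbTE ab); congr Some.
apply/eqP; rewrite eqn_leq; apply/andP; split.
  by apply/bigmax_leqP => k /asboolP; apply: hdp_le.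
have hd : deg adj a < #|T|.+1 by rewrite ltnS max_card.
by apply: (leq_bigmax_cond (Ordinal hd)); apply/asboolP; apply: hdp_deg.
Qed.

Lemma card_ordP n (P : pred nat) : #|[set u : 'I_n | P u]| = count P (iota 0 n).
Proof.
rewrite cardsE cardE /enum_mem -enumT size_filter -val_enum_ord count_map.
by apply: eq_count => x.
Qed.

Lemma maxnl m k : k <= m -> maxn m k = m. Proof. by move/maxn_idPl. Qed.
Lemma maxnr m k : m <= k -> maxn m k = k. Proof. by move/maxn_idPr. Qed.

Section S. Variable y : seq bool.
Local Notation yy l := (nth false y l).
Lemma sw_nat (I J X Z : nat) : I <= J -> (forall l, I <= l <= J -> yy l = yy J) ->
  X != Z ->
  yy (maxn (if X == I then J else if X == J then I else X) (if Z == I then J else if Z == J then I else Z))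
  = yy (maxn X Z).
Proof.
move=> hij hc xz.
have help : forall c, c != I -> c != J -> yy (maxn I c) = yy (maxn J c).
  move=> c ci cj; case: (leqP c I) => h1; case: (leqP c J) => h2 //;
  first [by apply: hc; lia | by exfalso; lia].
case: (eqVneq X I) => [xI|xI]; case: (eqVneq Z I) => [zI|zI].
- by move: xz; rewrite xI zI eqxx.
- rewrite xI; case: (eqVneq Z J) => [zJ|zJ]; first by rewrite zJ maxnC.
  by rewrite help.
- rewrite zI; case: (eqVneq X J) => [xJ|xJ]; first by rewrite xJ maxnC.
  by rewrite [maxn X J]maxnC [maxn X I]maxnC help.
- case: (eqVneq X J) => [xJ|xJ]; case: (eqVneq Z J) => [zJ|zJ] //.
  + by move: xz; rewrite xJ zJ eqxx.
  + by rewrite xJ help.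
  + by rewrite zJ [maxn X I]maxnC [maxn X J]maxnC help.
Qed.
End S.

Lemma bigmin_le_seq (I : eqType) (r : seq I) (P : pred I) (F : I -> nat) d i0 :
  i0 \in r -> P i0 -> \big[minn/d]_(i <- r | P i) F i <= F i0.
Proof.
elim: r => [|x r IH] //; rewrite inE big_cons => /predU1P [->|ir] hP.
  by rewrite hP geq_minl.
case: (P x); last exact: IH.
by apply: leq_trans (geq_minr _ _) (IH ir hP).
Qed.

Lemma bigmin_le (I : finType) (P : pred I) (F : I -> nat) d i0 :
  P i0 -> \big[minn/d]_(i | P i) F i <= F i0.
Proof. by apply: bigmin_le_seq; rewrite mem_index_enum. Qed.

Section Thr.
Variable n : nat.
Variable y : seq bool.
Hypothesis hn : 1 < n.
Hypothesis h01 : nth false y 0 = nth false y 1.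
Hypothesis hlast : nth false y n.-1 = true.

Local Notation yy l := (nth false y l).
Local Notation adj := (@threshold_adj n y).

Lemma adj_irr : irreflexive adj. Proof. by move=> i; rewrite /threshold_adj eqxx. Qed.
Lemma adj_sym : symmetric adj. Proof. by move=> i j; rewrite /threshold_adj eq_sym maxnC. Qed.
Lemma adjE (i j : 'I_n) : adj i j = (val i != val j) && yy (maxn i j). Proof. by []. Qed.

Lemma lst_lt : n.-1 < n. Proof. by rewrite ltn_predL ltnW. Qed.
Definition lst : 'I_n := Ordinal lst_lt.
Definition o0 : 'I_n := Ordinal (ltnW hn).

Lemma lst_dom (u : 'I_n) : u != lst -> adj u lst.
Proof.
move=> ul; rewrite adjE /=; have ub := ltn_ord u.
have -> : maxn u n.-1 = n.-1 by apply/maxn_idPr; lia.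
rewrite hlast andbT; apply: contra ul => /eqP e; apply/eqP; exact: val_inj.
Qed.

Section Swap.
Variables i j : 'I_n.
Hypothesis hij : i <= j.
Hypothesis hc : forall l, i <= l <= j -> yy l = yy j.

Definition sw (x : 'I_n) : 'I_n := if x == i then j else if x == j then i else x.

Lemma swK : involutive sw.
Proof.
move=> x; rewrite /sw.
case: (eqVneq x i) => [->|xi]; first by rewrite eqxx; case: eqVneq.
case: (eqVneq x j) => [->|xj]; first by rewrite eqxx.
by rewrite (negbTE xi) (negbTE xj).
Qed.

Lemma help (c : nat) : c != i -> c != j -> yy (maxn i c) = yy (maxn j c).
Proof.
move=> ci cj.
case: (leqP c i) => h1; case: (leqP c j) => h2 //;
  first [by apply: hc; lia | by exfalso; lia].
Qed.

Lemma sw_val x : val (sw x) = if val x == val i then val j else if val x == val j then val i else val x.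
Proof. by rewrite /sw !val_eqE; case: (x == i); case: (x == j). Qed.

Lemma sw_adj x z : adj (sw x) (sw z) = adj x z.
Proof.
rewrite !adjE !val_eqE (inj_eq (inv_inj swK)).
case: (eqVneq x z) => //= xz.
by rewrite !sw_val; apply: sw_nat => //; rewrite val_eqE.
Qed.


Lemma twin_kappa (w : 'I_n) : w != i -> w != j -> kappa adj i w = kappa adj j w.
Proof.
move=> wi wj; have := kappa_f swK sw_adj i w.
by rewrite /sw eqxx (negbTE wi) (negbTE wj) => <-.
Qed.
End Swap.

Definition cnt (s k : nat) := count (fun l => yy l) (iota s k).
Lemma cntD s k1 k2 : cnt s (k1 + k2) = cnt s k1 + cnt (s + k1) k2.
Proof. by rewrite /cnt iotaD count_cat. Qed.
Lemma cnt1 s : cnt s 1 = yy s. Proof. by rewrite /cnt /=; case: (yy s). Qed.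
Lemma cnt_le s k : cnt s k <= k. Proof. by rewrite /cnt -{2}(size_iota s k) count_size. Qed.

Lemma deg_formula (a : 'I_n) : deg adj a = (if yy a then val a else 0) + cnt a.+1 (n - a.+1).
Proof.
rewrite /deg /nbh.
pose P := fun l : nat => (l != a) && yy (maxn a l).
have -> : [set u | adj a u] = [set u : 'I_n | P u].
  by apply/setP => u; rewrite !inE adjE eq_sym.
rewrite card_ordP /P.
have ha := ltn_ord a.
have e : forall A, A < n -> iota 0 n = iota 0 A ++ A :: iota A.+1 (n - A.+1).
  by move=> A hA; rewrite -{1}(_ : A + (n - A.+1).+1 = n) ?iotaD //; lia.
rewrite (e _ ha) count_cat /= eqxx /=.
congr (_ + _).
  rewrite (@eq_in_count _ _ (fun _ => yy a)); last first.
    move=> l; rewrite mem_iota add0n => /andP [_ la].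
    by rewrite (maxnl (ltnW la)) (ltn_eqF la).
  by case: (yy a); rewrite ?count_predT ?count_pred0 ?size_iota.
rewrite /cnt; apply: eq_in_count => l; rewrite mem_iota => /andP [al _].
by rewrite (maxnr (ltnW al)) eq_sym (ltn_eqF al).
Qed.

Definition R : {set 'I_n} := [set i : 'I_n | (i == 0 :> nat) || (yy i.-1 != yy i)].

Lemma deg_inj (i j : 'I_n) : i < j -> i \in R -> j \in R -> deg adj i != deg adj j.
Proof.
move=> ij; rewrite !inE => iR jR.
have jR' : yy j.-1 != yy j by move: jR; case: eqP => //=; lia.
have hj := ltn_ord j.
rewrite !deg_formula.
have e : n - i.+1 = ((j - i.+1) + 1) + (n - j.+1) by lia.
rewrite e !cntD cnt1.
have e2 : i.+1 + (j - i.+1) = j by lia.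
have e3 : i.+1 + (j - i.+1 + 1) = j.+1 by lia.
rewrite e2 e3.
set C := cnt j.+1 (n - j.+1).
case hD : (j - i.+1) => [|D].
  have ji : (j : nat) = i.+1 by lia.
  have i0 : (i : nat) != 0.
    apply/negP => /eqP i0; move: jR'; rewrite ji i0 /= h01; by rewrite eqxx.
  rewrite /cnt /=.
  move: jR'; rewrite ji /=.
  by case: (yy i); case: (yy i.+1) => //= _; lia.
have e4 : D.+1 = D + 1 by lia.
rewrite e4 cntD cnt1.
have e5 : i.+1 + D = j.-1 by lia.
rewrite e5.
have := cnt_le i.+1 D.
move: jR'; case: (yy j.-1); case: (yy j) => //= _; case: (yy i) => /=; lia.
Qed.

Definition rs (v : 'I_n) : 'I_n := [arg max_(r > o0 | (r \in R) && (r <= v)) val r].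

Lemma rsP v : [/\ rs v \in R, rs v <= v,
   (forall l : nat, rs v < l <= v -> yy l.-1 = yy l) &
   (forall r : 'I_n, r \in R -> r <= v -> r <= rs v)].
Proof.
rewrite /rs; case: arg_maxnP => [|r /andP [rR rv] rmax].
  by rewrite inE eqxx.
split => //.
  move=> l /andP [rl lv]; have ln : l < n by apply: leq_ltn_trans lv _.
  case: (eqVneq (yy l.-1) (yy l)) => // ne.
  have := rmax (Ordinal ln); rewrite inE /= ne orbT lv => /(_ isT); lia.
by move=> r' r'R r'v; apply: rmax; rewrite r'R r'v.
Qed.

Lemma const_run a b : (forall l, a < l <= b -> yy l.-1 = yy l) ->
  forall l, a <= l <= b -> yy l = yy b.
Proof.
move=> h l /andP [al lb].
have : forall d l, a <= l -> l + d = b -> yy l = yy b.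
  elim=> [|d IH] l' al' e; first by rewrite -e addn0.
  rewrite -(IH l'.+1); [|lia|lia].
  by have := h l'.+1; rewrite /= => -> //; lia.
by move=> H; apply: (H (b - l)) => //; lia.
Qed.

Lemma rs_const v l : rs v <= l <= v -> yy l = yy v.
Proof. by case: (rsP v) => _ _ h _; apply: const_run. Qed.

Lemma rs_fix v : v \in R -> rs v = v.
Proof.
case: (rsP v) => _ h1 _ h2 vR; apply: val_inj; apply/eqP; rewrite eqn_leq h1.
exact: h2.
Qed.

Definition S := R :\ lst.

Lemma lt_lst (u : 'I_n) : u != lst -> u < n.-1.
Proof.
move=> ul; have hu := ltn_ord u.
have : (u : nat) != n.-1 by apply: contra ul => /eqP ee; apply/eqP; apply: val_inj.
lia.
Qed.

Lemma maxn_bounds (u w : 'I_n) : u != w -> u != lst -> w != lst ->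
  0 < maxn u w /\ maxn u w < n.-1.
Proof.
move=> uw /lt_lst hu /lt_lst hw.
have : (u : nat) != w by [].
split; last by rewrite gtn_max hu hw.
case: (leqP u w) => h; lia.
Qed.

Lemma find_v2 (C : {set 'I_n}) : lst \in R ->
  (forall r, r \in R -> exists2 v, v \in C & rs v = r) ->
  exists v2, [/\ v2 \in C, v2 != lst &
    forall u w : 'I_n, adj u w -> u != lst -> w != lst -> u != v2 -> adj u v2].
Proof.
move=> lR surj.
have rsl : rs lst = lst by apply: rs_fix.
case: (boolP [exists q : 'I_n, [&& 0 < q, q < n.-1 & yy q]]).
  move=> /existsP [q0 hq0].
  case: (@arg_maxnP _ q0 (fun q : 'I_n => [&& 0 < q, q < n.-1 & yy q])
     (fun q : 'I_n => nat_of_ord q) hq0) => q /and3P [q0' qn yq] qmax.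
  have [v2 v2C e] := surj (rs q) (let: And4 a _ _ _ := rsP q in a).
  case: (rsP q) => _ rq _ _; case: (rsP v2) => _ rv2 _ _.
  have v2l : v2 != lst.
    apply/negP => /eqP v2l; subst v2; move: e rq qn; rewrite rsl => <- /=.
    clear; lia.
  have yv2 : yy v2 = true.
    rewrite -(rs_const (l := rs v2)) ?rv2 ?leqnn // e (rs_const (v := q)) ?rq ?leqnn //.
  have v2q : v2 <= q.
    case: (leqP v2 q) => // h; have := qmax v2.
    have hv2 := lt_lst v2l.
    rewrite yv2 andbT /= hv2 andbT.
    have -> : 0 < v2 by move: h; clear; lia.
    by move=> /(_ isT); move: h; clear; lia.
  have yq2 : forall l, v2 <= l <= q -> yy l = true.
    move=> l /andP [h1 h2]; rewrite -yq; apply: rs_const; rewrite h2 andbT -e.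
    by apply: leq_trans h1.
  exists v2; split => // u w uw ul wl uv2.
  move: (uw); rewrite adjE => /andP [uw' ym].
  have [m0 mn] := maxn_bounds uw' ul wl.
  have mn' : maxn u w < n by apply: leq_trans mn (leq_pred _).
  have mq : maxn u w <= q.
    by have := qmax (Ordinal mn'); rewrite /= ym andbT m0 mn; apply.
  rewrite adjE uv2 /=.
  case: (leqP u v2) => h; first by rewrite yv2.
  apply: yq2; rewrite (ltnW h) /=; apply: leq_trans mq; exact: leq_maxl.
rewrite negb_exists => /forallP noq.
have o0R : o0 \in R by rewrite inE eqxx.
have [v2 v2C e] := surj o0 o0R.
exists v2; split => //.
  apply/negP => /eqP v2l; subst v2; move: e; rewrite rsl => /(congr1 val) /=.
  by move: hn; clear; lia.
move=> u w; rewrite adjE => /andP [uw ym] ul wl uv2; exfalso.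
have [m0 mn] := maxn_bounds uw ul wl.
have mn' : maxn u w < n by apply: leq_trans mn (leq_pred _).
by have := noq (Ordinal mn'); rewrite /= ym m0 mn.
Qed.


Lemma kappa_lst (v : 'I_n) : v != lst -> kappa adj v lst = Some (deg adj v).
Proof.
move=> vl; apply: kappa_deg => //; first exact: adj_irr.
by move=> u _ ul; apply: lst_dom.
Qed.

Lemma ub_res : resolving adj (~: S).
Proof.
apply/forallP => v1; apply/forallP => v2; apply/implyP => /forallP H.
case: (boolP (v1 \in S)) => h1; last first.
  have := H v1; rewrite inE h1 /= /kappa eqxx.
  by case: (eqVneq v2 v1).
case: (boolP (v2 \in S)) => h2; last first.
  have := H v2; rewrite inE h2 /= /kappa eqxx.
  by case: (eqVneq v1 v2).
have lS : lst \notin S by rewrite !inE eqxx.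
have := H lst; rewrite inE lS /=.
move: h1 h2 => /setD1P [l1 r1] /setD1P [l2 r2].
rewrite !kappa_lst // => /eqP [] ed.
case: (ltngtP v1 v2) => h.
- by move: (deg_inj h r1 r2); rewrite ed eqxx.
- by move: (deg_inj h r2 r1); rewrite ed eqxx.
- by apply/eqP; apply: val_inj.
Qed.

Lemma lb_res (W : {set 'I_n}) : resolving adj W -> n - #|S| <= #|W|.
Proof.
move=> hW.
set C := ~: W.
have hCW : #|W| + #|C| = n by rewrite cardsC card_ord.
have res : forall v1 v2, (forall u, u \in W -> kappa adj v1 u = kappa adj v2 u) -> v1 = v2.
  move=> v1 v2 H; apply/eqP.
  move/forallP: hW => /(_ v1) /forallP /(_ v2) /implyP; apply.
  by apply/forallP => u; apply/implyP => uW; apply/eqP; apply: H.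
have same : forall v1 v2 : 'I_n, v1 \in C -> v2 \in C -> v1 <= v2 ->
    (forall l, v1 <= l <= v2 -> yy l = yy v2) -> v1 = v2.
  move=> v1 v2 c1 c2 le H; apply: res => u uW.
  apply: twin_kappa => //.
    by apply: contraTneq uW => ->; rewrite inE in c1.
  by apply: contraTneq uW => ->; rewrite inE in c2.
have rsinj : {in C &, injective rs}.
  have key : forall v1 v2, v1 \in C -> v2 \in C -> rs v1 = rs v2 -> v1 <= v2 -> v1 = v2.
    move=> v1 v2 c1 c2 e le; apply: same => // l /andP [h1 h2].
    apply: rs_const; case: (rsP v1) => _ r1 _ _; rewrite -e; lia.
  move=> v1 v2 c1 c2 e; case: (leqP v1 v2) => h; first exact: key.
  by apply/esym/key => //; apply: ltnW.
have hCR : #|C| <= #|R|.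
  rewrite -(card_in_imset rsinj); apply: subset_leq_card.
  by apply/subsetP => r /imsetP [v _ ->]; case: (rsP v).
have hRS : #|R| = (lst \in R) + #|S| by rewrite /S -cardsD1.
case: (boolP (lst \in R)) => lR; last first.
  rewrite (negbTE lR) /= add0n in hRS.
  by move: hCW hCR hRS; move: #|W| #|C| #|R| #|S| => a b c d; lia.
rewrite lR /= in hRS.
case: (ltnP #|C| #|R|) => hlt.
  by move: hCW hlt hRS; move: #|W| #|C| #|R| #|S| => a b c d; lia.
exfalso.
have himg : rs @: C = R.
  apply/eqP; rewrite eqEcard; rewrite card_in_imset // hlt andbT.
  by apply/subsetP => r /imsetP [v _ ->]; case: (rsP v).
have surj : forall r, r \in R -> exists2 v, v \in C & rs v = r.
  by move=> r; rewrite -himg => /imsetP [v vC ->]; exists v.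
have rsl : rs lst = lst by apply: rs_fix.
have lC : lst \in C.
  have [v vC e] := surj lst lR.
  suff -> : lst = v by [].
  apply: val_inj => /=; case: (rsP v) => _ h _ _.
  have := ltn_ord v; move: h; rewrite e /=; clear; lia.
have [v2 [v2C v2l D]] := find_v2 lR surj.
suff : v2 = lst by apply/eqP.
apply: res => u uW.
have uv2 : u != v2 by apply: contraTneq uW => ->; rewrite inE in v2C.
have ul : u != lst by apply: contraTneq uW => ->; rewrite inE in lC.
rewrite (kappa_sym adj_sym v2 u) (kappa_sym adj_sym lst u).
rewrite !kappa_deg //; try exact: adj_irr.
- by move=> x _ xl; apply: lst_dom.
- move=> x ux xv2; case: (eqVneq x lst) => [->|xl].
    by rewrite adj_sym; apply: lst_dom.
  by apply: (D x u) => //; rewrite adj_sym.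
Qed.

Lemma cdim_val : cdim adj = n - #|S|.
Proof.
apply/eqP; rewrite eqn_leq; apply/andP; split.
  rewrite /cdim; apply: leq_trans (@bigmin_le _ _ (fun W : {set 'I_n} => #|W|) _ _ ub_res) _.
  have := cardsC S; rewrite card_ord => e; lia.
rewrite /cdim; apply: (big_ind (fun x => n - #|S| <= x)).
- by rewrite card_ord leq_subr.
- by move=> a b ha hb; rewrite leq_min ha hb.
- by move=> W; apply: lb_res.
Qed.
End Thr.

Lemma bs_cons x xs k ks : block_seq (x :: xs) (k :: ks) = nseq k x ++ block_seq xs ks.
Proof. by []. Qed.

Lemma size_bs xs ks : size xs = size ks -> size (block_seq xs ks) = sumn ks.
Proof.
elim: xs ks => [|x xs IH] [|k ks] //= [e].
by rewrite size_cat size_nseq -(IH _ e).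
Qed.

Lemma bs_rcons xs ks x k : size xs = size ks ->
  block_seq (rcons xs x) (rcons ks k) = block_seq xs ks ++ nseq k x.
Proof.
elim: xs ks => [|x' xs IH] [|k' ks] //=; first by rewrite /block_seq /= cats0.
by move=> [e]; rewrite bs_cons IH // catA.
Qed.

Lemma last_bs xs ks : size xs = size ks -> (forall j, j < size ks -> 0 < nth 0 ks j) ->
  last false (block_seq xs ks) = last false xs.
Proof.
case/lastP: xs => [|xs x]; case/lastP: ks => [|ks k] //; rewrite ?size_rcons //.
move=> [e] pos; rewrite bs_rcons // last_cat last_rcons.
have := pos (size ks); rewrite ltnSn nth_rcons ltnn eqxx => /(_ isT).
by case: k {pos} => // k _ /=; elim: k => //.
Qed.

Fixpoint chg (a : bool) (s : seq bool) : nat :=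
  if s is b :: s' then (a != b) + chg b s' else 0.

Lemma chg_nseq a k s : chg a (nseq k a ++ s) = chg a s.
Proof. by elim: k => //= k IH; rewrite eqxx. Qed.

Lemma chg_bs xs ks : size xs = size ks ->
  (forall j, j.+1 < size xs -> nth false xs j != nth false xs j.+1) ->
  (forall j, j < size ks -> 0 < nth 0 ks j) ->
  chg (head false xs) (block_seq xs ks) = (size xs).-1.
Proof.
elim: xs ks => [|x xs IH] [|k ks] //= [e] alt pos.
rewrite chg_nseq.
case: xs ks e alt pos IH => [|x' xs] [|k' ks] //= e alt pos IH.
have hk' : 0 < k' by apply: (pos 1).
have ih := IH (k' :: ks) e (fun j h => alt j.+1 h) (fun j h => pos j.+1 h).
rewrite /= chg_nseq in ih.
set B := block_seq xs ks in ih *.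
case: k' hk' {ih IH pos} (ih) => // k'' _ ih.
change (chg x (x' :: (nseq k'' x' ++ B)) = (size xs).+1).
change ((x != x') + chg x' (nseq k'' x' ++ B) = (size xs).+1).
by rewrite chg_nseq ih (alt 0 isT).
Qed.

Lemma chg_count a s :
  chg a s = count (fun i => nth false (a :: s) i != nth false s i) (iota 0 (size s)).
Proof.
elim: s a => [|b s IH] a //=.
rewrite IH; congr (_ + _).
by rewrite -[1]addn0 iotaDl count_map.
Qed.

Lemma bs_tail xs ks : size xs = size ks -> 0 < size xs ->
  (forall j, j < size ks -> 0 < nth 0 ks j) ->
  (forall j, j.+1 < size xs -> nth false xs j != nth false xs j.+1) ->
  nth false xs (size xs).-1 = true -> 1 < sumn ks ->
  nth false (block_seq xs ks) (sumn ks).-1 = true /\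
  nth false (block_seq xs ks) (sumn ks).-2 = (1 < nth 0 ks (size ks).-1).
Proof.
case/lastP: xs => [|xs x] //; case/lastP: ks => [|ks k]; rewrite ?size_rcons // => -[e] _ pos alt xl n2.
rewrite /= nth_rcons ltnn eqxx in xl; subst x.
rewrite /= nth_rcons ltnn eqxx.
have hk : 0 < k by have := pos (size ks); rewrite ltnSn nth_rcons ltnn eqxx; apply.
rewrite sumn_rcons in n2 *; rewrite bs_rcons // !nth_cat (size_bs e) !nth_nseq.
set N := sumn ks in n2 *.
split.
  have -> : (N + k).-1 < N = false by apply/negbTE; rewrite -leqNgt; lia.
  by have -> : (N + k).-1 - N < k by lia.
case: k hk n2 pos => [|[|k]] // _ n2 pos; last first.
  have -> : (N + k.+2).-2 < N = false by apply/negbTE; rewrite -leqNgt; lia.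
  by have -> : (N + k.+2).-2 - N < k.+2 by lia.
have -> : (N + 1).-2 < N by lia.
have -> : (N + 1).-2 = (size (block_seq xs ks)).-1 by rewrite (size_bs e); lia.
rewrite nth_last last_bs //; last first.
  by move=> j hj; have := pos j; rewrite nth_rcons hj; apply; apply: ltnW.
have sx : 0 < size xs by rewrite e; move: n2; rewrite /N; case: (ks).
have h1 : nth false (rcons xs true) (size xs) = true by rewrite nth_rcons ltnn eqxx.
have h2 : nth false (rcons xs true) (size xs).-1 = nth false xs (size xs).-1.
  by rewrite nth_rcons (_ : (size xs).-1 < size xs) // prednK.
have := alt (size xs).-1; rewrite prednK // h1 h2 ltnSn.
by rewrite -nth_last; case: (nth false xs (size xs).-1) => // /(_ isT).
Qed.

Lemma count_R (a : bool) (s : seq bool) :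
  count (fun i => (i == 0) || (nth false (a :: s) i.-1 != nth false (a :: s) i)) (iota 0 (size s).+1)
  = 1 + chg a s.
Proof.
rewrite /= chg_count; congr (_ + _).
by rewrite -[1]addn0 iotaDl count_map.
Qed.

Theorem mainTheorem5 (m : nat) (xs : seq bool) (ks : seq nat) :
  1 <= m -> size xs = m -> size ks = m ->
  (forall j, j.+1 < m -> nth false xs j != nth false xs j.+1) ->
  nth false xs m.-1 = true ->
  (forall j, j < m -> 0 < nth 0 ks j) ->
  2 <= nth 0 ks 0 ->
  cdim (@threshold_adj (sumn ks) (block_seq xs ks)) =
  (if 1 < nth 0 ks m.-1 then sumn ks - m else sumn ks - m + 1).
Proof.
move=> hm hxs hks alt xl pos k1.
have e : size xs = size ks by rewrite hxs hks.
have pos' : forall j, j < size ks -> 0 < nth 0 ks j by rewrite hks.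
have alt' : forall j, j.+1 < size xs -> nth false xs j != nth false xs j.+1 by rewrite hxs.
have hsz := size_bs e.
have hn : 1 < sumn ks.
  case: ks hks k1 {pos pos' e hsz} => [|k ks'] /=; first by [].
  move=> _ k1; lia.
have sx : 0 < size xs by rewrite hxs.
have xl' : nth false xs (size xs).-1 = true by rewrite hxs.
have [hl hl2] := bs_tail e sx pos' alt' xl' hn.
rewrite hks in hl2.
have [x [s [hs hx]]] : exists x s, block_seq xs ks = x :: x :: s /\ head false xs = x.
  case: xs ks hxs hks k1 {alt alt' xl xl' sx pos pos' e hsz hn hl hl2} => [|x xs'] [|k ks'] //=;
    try (by move=> <-); try (by move=> _ <-).
  move=> _ _; case: k => [|[|k]] // _; exists x, (nseq k x ++ block_seq xs' ks').
  by rewrite bs_cons.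
have h01 : nth false (block_seq xs ks) 0 = nth false (block_seq xs ks) 1 by rewrite hs.
rewrite (cdim_val hn h01 hl).
have hRS : #|R (sumn ks) (block_seq xs ks)| = (lst hn \in R _ (block_seq xs ks)) + #|S (block_seq xs ks) hn|.
  by rewrite /S -cardsD1.
have hlR : (lst hn \in R _ (block_seq xs ks)) = ~~ (1 < nth 0 ks m.-1).
  rewrite inE /= hl2 hl.
  have -> : ((sumn ks).-1 == 0) = false by apply/negbTE; lia.
  by case: (1 < nth 0 ks m.-1).
have hRn : #|R (sumn ks) (block_seq xs ks)| <= sumn ks.
  by rewrite -[X in _ <= X]card_ord max_card.
have hR : #|R (sumn ks) (block_seq xs ks)| = m.
  rewrite /R.
  pose P := fun i : nat => (i == 0) || (nth false (block_seq xs ks) i.-1 != nth false (block_seq xs ks) i).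
  have -> : [set i : 'I_(sumn ks) | (i == 0 :> nat) || (nth false (block_seq xs ks) i.-1 != nth false (block_seq xs ks) i)]
     = [set i : 'I_(sumn ks) | P i] by [].
  rewrite card_ordP -hsz /P hs.
  rewrite (count_R x (x :: s)) /= !eqxx !add0n.
  have hc := chg_bs e alt' pos'; rewrite hs hx /= !eqxx !add0n in hc.
  rewrite hc hxs; lia.
rewrite hlR in hRS.
move: hRS hRn hR; move: #|R _ _| #|S _ _| => a b.
by case: (1 < nth 0 ks m.-1) => /= ? ? ?; lia.
Qed.
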